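(* There exist constants $c,C>0$ such that for all integers $n\ge2$ and $k\in\mathbb{N}$ with $k\le n^{1/4}$, and all $z\in\mathbb{Z}^2$ with $\|z\|\ge5\sqrt n$, $$\Pr\big[R(n)\cap Q(z,k)\neq\emptyset\big]\le\frac{C}{\log n}\exp\Big(-c\frac{\|z\|^2}{n}\Big).$$
   Context: $S$ is simple symmetric random walk on $\mathbb{Z}^2$ started at $S(0)=0$ (law $\Pr$), $R(n)=\{S(0),\ldots,S(n)\}$. $\|\cdot\|$ is the Euclidean norm. For $z\in\mathbb{Z}^2$ and $k\in\mathbb{N}$, $Q(z,k)=\{z+(j,j'): -k\le j,j'\le k\}$ is the square of side length $2k+1$ centered at $z$. Logarithms are base $2$. *)

(* Defs.v *)
From Stdlib Require Import Reals ZArith List Lia Lra.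
Import ListNotations.
Open Scope R_scope.

Inductive dir : Type := East | West | North | South.

Definition step (d : dir) : Z * Z :=
  match d with
  | East => (1%Z, 0%Z) | West => ((-1)%Z, 0%Z)
  | North => (0%Z, 1%Z) | South => (0%Z, (-1)%Z)
  end.

Definition addZ2 (p q : Z * Z) : Z * Z := (fst p + fst q, snd p + snd q)%Z.

Fixpoint all_paths (n : nat) : list (list dir) :=
  match n with
  | O => [ [] ]
  | S m => flat_map (fun p => map (fun d => d :: p) [East; West; North; South])
                    (all_paths m)
  end.

Definition in_square (z : Z * Z) (k : nat) (x : Z * Z) : bool :=
  (Z.abs (fst x - fst z) <=? Z.of_nat k)%Z && (Z.abs (snd x - snd z) <=? Z.of_nat k)%Z.

(* Does the walk starting at position pos with steps ds visit Q(z,k),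
   counting the starting position (so R(n) = {S(0),...,S(n)}). *)
Fixpoint visits (z : Z * Z) (k : nat) (pos : Z * Z) (ds : list dir) : bool :=
  in_square z k pos ||
  match ds with
  | [] => false
  | d :: ds' => visits z k (addZ2 pos (step d)) ds'
  end.

(* Pr[R(n) ∩ Q(z,k) ≠ ∅] for SRW started at 0: the first n steps are
   uniform over the 4^n step sequences. *)
Definition hit_prob (n : nat) (z : Z * Z) (k : nat) : R :=
  INR (length (filter (visits z k (0%Z, 0%Z)) (all_paths n))) / 4 ^ n.

Definition normZ2 (z : Z * Z) : R := sqrt (IZR (fst z) ^ 2 + IZR (snd z) ^ 2).

Definition log2 (x : R) : R := ln x / ln 2.

(* Main.v *)
Require Import Defs.
From Stdlib Require Import Reals ZArith List Lia Lra.
Import ListNotations.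
Open Scope R_scope.

Definition hc (z : Z*Z) (k m : nat) (pos : Z*Z) : nat :=
  length (filter (visits z k pos) (all_paths m)).

Lemma all_paths_len : forall m, length (all_paths m) = (4 ^ m)%nat.
Proof.
  induction m; simpl; auto.
  rewrite <- IHm. clear IHm. induction (all_paths m); simpl; auto.
  rewrite IHl. lia.
Qed.

Lemma hc_0 : forall z k pos, hc z k 0 pos = if in_square z k pos then 1%nat else 0%nat.
Proof. intros. unfold hc. simpl. destruct (in_square z k pos); reflexivity. Qed.

Lemma hc_S_in : forall z k m pos, in_square z k pos = true -> hc z k (S m) pos = (4 ^ S m)%nat.
Proof.
  intros. unfold hc. rewrite <- all_paths_len. simpl.
  induction (all_paths m); simpl; auto.
  rewrite H. simpl. rewrite IHl. reflexivity.
Qed.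

Lemma hc_S_out : forall z k m pos, in_square z k pos = false ->
  hc z k (S m) pos = (hc z k m (addZ2 pos (step East)) + hc z k m (addZ2 pos (step West))
     + hc z k m (addZ2 pos (step North)) + hc z k m (addZ2 pos (step South)))%nat.
Proof.
  intros. unfold hc. simpl.
  induction (all_paths m); simpl; auto.
  rewrite H. simpl in *.
  destruct (visits z k (addZ2 pos (1%Z, 0%Z)) a);
  destruct (visits z k (addZ2 pos ((-1)%Z, 0%Z)) a);
  destruct (visits z k (addZ2 pos (0%Z, 1%Z)) a);
  destruct (visits z k (addZ2 pos (0%Z, (-1)%Z)) a); simpl; rewrite IHl; lia.
Qed.

Fixpoint q (j : nat) (a : Z) : R :=
  match j with
  | O => if Z.eq_dec a 0 then 1 else 0
  | S j' => (q j' (a - 1) + q j' (a + 1)) / 2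
  end.

Lemma q_nonneg : forall j a, 0 <= q j a.
Proof.
  induction j; intros; simpl.
  - destruct (Z.eq_dec a 0); lra.
  - specialize (IHj (a-1)%Z) as H1. specialize (IHj (a+1)%Z). lra.
Qed.

Lemma q_sym : forall j a, q j (- a) = q j a.
Proof.
  induction j; intros; simpl.
  - destruct (Z.eq_dec (-a) 0); destruct (Z.eq_dec a 0); try lra; lia.
  - replace (- a - 1)%Z with (- (a + 1))%Z by lia.
    replace (- a + 1)%Z with (- (a - 1))%Z by lia.
    rewrite !IHj. lra.
Qed.

Lemma q_par : forall j a, Z.Odd (Z.of_nat j + a) -> q j a = 0.
Proof.
  induction j; intros; simpl.
  - destruct (Z.eq_dec a 0); auto. subst. simpl in H. destruct H. lia.
  - destruct H as [m Hm]. rewrite IHj, IHj. lra.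
    + exists m. lia.
    + exists (m - 1)%Z. lia.
Qed.

Lemma q_ratio : forall j a,
  q j (a + 2) * (INR j + IZR a + 2) = q j a * (INR j - IZR a).
Proof.
  induction j; intros.
  - simpl. destruct (Z.eq_dec (a+2) 0); destruct (Z.eq_dec a 0); try lia.
    + replace a with (-2)%Z by lia. simpl. lra.
    + subst. simpl. lra.
    + lra.
  - simpl q. rewrite S_INR.
    pose proof (IHj (a + 1)%Z) as H1. pose proof (IHj (a - 1)%Z) as H2.
    replace (a + 1 + 2)%Z with (a + 2 + 1)%Z in H1 by lia.
    replace (a + 2 - 1)%Z with (a + 1)%Z by lia.
    assert (E: q j (a + 2 + 1) * (INR j + IZR a + 3) = q j (a+1) * (INR j - IZR a - 1)).
    { rewrite plus_IZR in H1. simpl in H1. nra. }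
    assert (E2: q j (a + 1) * (INR j + IZR a + 1) = q j (a-1) * (INR j - IZR a + 1)).
    { replace (a-1+2)%Z with (a+1)%Z in H2 by lia. rewrite minus_IZR in H2. simpl in H2. nra. }
    nra.
Qed.

Lemma q_S : forall j a, q (S j) a = (q j (a - 1) + q j (a + 1)) / 2.
Proof. reflexivity. Qed.

Lemma q_odd1 : forall m, q (S (2*m)) 1 = (q (2*m) 0 + q (2*m) 2) / 2.
Proof. intros. rewrite q_S. reflexivity. Qed.

Lemma q_step_le : forall j a, (-1 <= a)%Z -> q j (a + 2) <= q j a.
Proof.
  intros. pose proof (q_ratio j a). pose proof (q_nonneg j a). pose proof (q_nonneg j (a+2)).
  pose proof (pos_INR j). apply IZR_le in H. simpl in H. nra.
Qed.

Lemma q_center_rec : forall m,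
  q (2 * S m) 0 * (2 * INR m + 2) = q (2*m) 0 * (2 * INR m + 1).
Proof.
  intros. replace (2 * S m)%nat with (S (S (2*m))) by lia.
  rewrite q_S. replace (0-1)%Z with (-(1))%Z by lia. rewrite q_sym.
  replace (0+1)%Z with 1%Z by lia.
  rewrite q_odd1. pose proof (q_ratio (2*m) 0). rewrite mult_INR in H.
  replace (0+2)%Z with 2%Z in H by lia. change (IZR 0) with 0 in H. change (INR 2) with 2 in H.
  nra.
Qed.

Lemma q_center_up : forall m, q (2*m) 0 ^ 2 * (3 * INR m + 1) <= 1.
Proof.
  induction m.
  - simpl. lra.
  - pose proof (q_center_rec m). rewrite S_INR.
    pose proof (pos_INR m). pose proof (q_nonneg (2*m) 0). pose proof (q_nonneg (2*S m) 0).
    set (x := q (2*m) 0) in *. set (y := q (2 * S m) 0) in *. set (t := INR m) in *.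
    assert (Hy : y = x * (2*t+1)/(2*t+2)) by (field_simplify_eq; lra).
    rewrite Hy. 
    assert (x ^ 2 * ((2 * t + 1)^2 * (3 * (t + 1) + 1)) <= x^2 * ((2*t+2)^2 * (3*t+1))).
    { apply Rmult_le_compat_l. nra. nra. }
    apply Rmult_le_reg_r with ((2*t+2)^2). nra.
    replace ((x * (2 * t + 1) / (2 * t + 2)) ^ 2 * (3 * (t + 1) + 1) * (2 * t + 2) ^ 2)
      with (x ^ 2 * (2 * t + 1)^2 * (3 * (t + 1) + 1)) by (field; lra).
    nra.
Qed.

Lemma q_center_lo : forall m, 1 <= q (2*m) 0 ^ 2 * (4 * INR m + 1).
Proof.
  induction m.
  - simpl. lra.
  - pose proof (q_center_rec m). rewrite S_INR.
    pose proof (pos_INR m). pose proof (q_nonneg (2*m) 0). pose proof (q_nonneg (2*S m) 0).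
    set (x := q (2*m) 0) in *. set (y := q (2 * S m) 0) in *. set (t := INR m) in *.
    assert (Hy : y = x * (2*t+1)/(2*t+2)) by (field_simplify_eq; lra).
    rewrite Hy.
    assert (x^2 * ((2*t+2)^2 * (4*t+1)) <= x ^ 2 * ((2 * t + 1)^2 * (4 * (t + 1) + 1))).
    { apply Rmult_le_compat_l. nra. nra. }
    apply Rmult_le_reg_r with ((2*t+2)^2). nra.
    replace ((x * (2 * t + 1) / (2 * t + 2)) ^ 2 * (4 * (t + 1) + 1) * (2 * t + 2) ^ 2)
      with (x ^ 2 * (2 * t + 1)^2 * (4 * (t + 1) + 1)) by (field; lra).
    nra.
Qed.

Lemma exp_le_mono : forall x y, x <= y -> exp x <= exp y.
Proof. intros. destruct H. left. apply exp_increasing. auto. subst. lra. Qed.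

Lemma one_minus_le_exp : forall x, 1 - x <= exp (- x).
Proof. intros. pose proof (exp_ineq1_le (-x)). lra. Qed.

Lemma s_bound : forall j, (q j 0 + q j 1) ^ 2 * (INR j + 1) <= 2.
Proof.
  intros. destruct (Nat.Even_or_Odd j) as [[m Hm]|[m Hm]]; subst.
  - rewrite (q_par (2*m) 1). 2:{ exists (Z.of_nat m). lia. }
    pose proof (q_center_up m). rewrite mult_INR. simpl (INR 2).
    pose proof (pos_INR m). pose proof (q_nonneg (2*m) 0). nra.
  - rewrite (q_par (2*m+1) 0). 2:{ exists (Z.of_nat m). lia. }
    replace (2*m+1)%nat with (S (2*m)) by lia. rewrite q_odd1.
    pose proof (q_step_le (2*m) 0 ltac:(lia)). replace (0+2)%Z with 2%Z in H by lia.
    pose proof (q_center_up m). rewrite S_INR, mult_INR. simpl (INR 2).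
    pose proof (pos_INR m). pose proof (q_nonneg (2*m) 0). pose proof (q_nonneg (2*m) 2).
    set (x := q (2*m) 0) in *. set (y := q (2*m) 2) in *.
    assert ((0 + (x+y)/2)^2 <= x^2) by nra. nra.
Qed.

Lemma q_step_gauss : forall j (t : nat),
  q j (Z.of_nat t + 2) <= q j (Z.of_nat t) * exp (- (INR t + 1) / (INR j + 1)).
Proof.
  intros. pose proof (q_ratio j (Z.of_nat t)). rewrite <- INR_IZR_INZ in H.
  pose proof (q_nonneg j (Z.of_nat t)). pose proof (q_nonneg j (Z.of_nat t + 2)).
  pose proof (pos_INR t). pose proof (pos_INR j).
  pose proof (exp_pos (- (INR t + 1) / (INR j + 1))).
  destruct (Rle_lt_dec (INR t) (INR j)).
  - set (x := (2 * INR t + 2) / (INR j + INR t + 2)).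
    assert (Hx : (INR j - INR t) / (INR j + INR t + 2) = 1 - x) by (unfold x; field; lra).
    assert (Hq : q j (Z.of_nat t + 2) = q j (Z.of_nat t) * (1 - x)).
    { rewrite <- Hx. field_simplify_eq; [|lra]. lra. }
    rewrite Hq. apply Rmult_le_compat_l; auto.
    eapply Rle_trans. apply one_minus_le_exp. apply exp_le_mono.
    unfold x. unfold Rdiv. rewrite <- !Ropp_mult_distr_l. apply Ropp_le_contravar.
    apply Rmult_le_reg_r with ((INR j + 1) * (INR j + INR t + 2)). nra.
    field_simplify; try lra. nra.
  - assert (q j (Z.of_nat t + 2) <= 0) by nra. nra.
Qed.

Lemma q_gauss_nat : forall j (t : nat),
  q j (Z.of_nat t) <= (q j 0 + q j 1) * exp (- (INR t ^ 2 - 1) / (4 * (INR j + 1))).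
Proof.
  intros j.
  assert (forall t, q j (Z.of_nat t) <= (q j 0 + q j 1) * exp (- (INR t ^ 2 - 1) / (4 * (INR j + 1)))
     /\ q j (Z.of_nat (S t)) <= (q j 0 + q j 1) * exp (- (INR (S t) ^ 2 - 1) / (4 * (INR j + 1)))).
  { pose proof (q_nonneg j 0). pose proof (q_nonneg j 1). pose proof (pos_INR j).
    induction t.
    - split.
      + simpl. apply Rle_trans with ((q j 0 + q j 1) * 1). lra.
        apply Rmult_le_compat_l. lra. 
        replace (- ((0 * (0 * 1)) - 1) / (4 * (INR j + 1))) with (/ (4 * (INR j + 1))) by (field; lra).
        pose proof (exp_ineq1_le (/ (4 * (INR j + 1)))).
        assert (0 < / (4 * (INR j + 1))) by (apply Rinv_0_lt_compat; lra). lra.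
      + simpl. replace (- (1 * (1 * 1) - 1) / (4 * (INR j + 1))) with 0 by (field; lra).
        rewrite exp_0. lra.
    - destruct IHt as [IH1 IH2]. split; auto.
      replace (Z.of_nat (S (S t))) with (Z.of_nat t + 2)%Z by lia.
      eapply Rle_trans. apply q_step_gauss.
      eapply Rle_trans. apply Rmult_le_compat_r. left; apply exp_pos. apply IH1.
      rewrite Rmult_assoc, <- exp_plus. right. f_equal. f_equal.
      rewrite !S_INR. field. lra. }
  intros. apply H.
Qed.

Lemma q_gauss : forall j a,
  q j a <= (q j 0 + q j 1) * exp (1/4) * exp (- IZR a ^ 2 / (4 * (INR j + 1))).
Proof.
  intros.
  assert (Ha : q j a = q j (Z.of_nat (Z.abs_nat a)) /\ IZR a ^ 2 = INR (Z.abs_nat a) ^ 2).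
  { rewrite INR_IZR_INZ. rewrite Nat2Z.inj_abs_nat.
    destruct (Z_le_gt_dec 0 a).
    - rewrite Z.abs_eq by lia. auto.
    - rewrite Z.abs_neq by lia. rewrite q_sym. split; auto. rewrite Ropp_Ropp_IZR. ring. }
  destruct Ha as [H1 H2]. rewrite H1, H2.
  eapply Rle_trans. apply q_gauss_nat.
  pose proof (q_nonneg j 0). pose proof (q_nonneg j 1). pose proof (pos_INR j).
  rewrite Rmult_assoc. apply Rmult_le_compat_l. lra.
  rewrite <- exp_plus. apply exp_le_mono.
  set (u := INR (Z.abs_nat a) ^ 2).
  replace (- (u - 1) / (4 * (INR j + 1))) with (/ (4 * (INR j + 1)) + - u / (4 * (INR j + 1))) by (field; lra).
  apply Rplus_le_compat_r.
  apply Rmult_le_reg_r with (4 * (INR j + 1)). lra.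
  rewrite Rinv_l by lra. field_simplify; lra.
Qed.

Lemma q_step_lower : forall j (a : nat), (1 <= j)%nat -> (2 * INR a + 2 <= INR j) ->
  q j (Z.of_nat a + 2) * INR j >= q j (Z.of_nat a) * (INR j - (2 * INR a + 2)).
Proof.
  intros. pose proof (q_ratio j (Z.of_nat a)). rewrite <- INR_IZR_INZ in H1.
  pose proof (q_nonneg j (Z.of_nat a)). pose proof (q_nonneg j (Z.of_nat a + 2)).
  pose proof (pos_INR a). apply le_INR in H. simpl in H.
  set (A := INR a) in *. set (J := INR j) in *.
  set (x := q j (Z.of_nat a)) in *. set (y := q j (Z.of_nat a + 2)) in *.
  assert (y * J * (J + A + 2) >= x * (J - (2*A+2)) * (J + A + 2)).
  { replace (y * J * (J + A + 2)) with (y * (J + A + 2) * J) by ring. rewrite H1.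
    assert (x * ((J - A) * J - (J - (2*A+2)) * (J + A + 2)) >= 0).
    { apply Rle_ge, Rmult_le_pos; nra. } nra. }
  apply Rle_ge. apply Rmult_le_reg_r with (J + A + 2). lra. lra.
Qed.

Lemma q_lower_nat : forall j (rho t : nat), (1 <= j)%nat ->
  q j (Z.of_nat (rho + 2 * t)) >= q j (Z.of_nat rho) * (1 - INR (rho + 2 * t) ^ 2 / (2 * INR j)).
Proof.
  intros j rho t Hj. pose proof (le_INR _ _ Hj) as HJ. simpl in HJ.
  pose proof (q_nonneg j (Z.of_nat rho)) as Hq0.
  induction t.
  - rewrite Nat.add_0_r. 
    assert (0 <= INR rho ^ 2 / (2 * INR j)).
    { apply Rmult_le_pos. nra. left. apply Rinv_0_lt_compat. lra. }
    nra.
  - replace (rho + 2 * S t)%nat with ((rho + 2*t) + 2)%nat by lia.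
    set (a := (rho + 2*t)%nat) in *.
    replace (Z.of_nat (a + 2)) with (Z.of_nat a + 2)%Z by lia.
    rewrite plus_INR. replace (INR 2) with 2 by (simpl; ring).
    pose proof (pos_INR a). pose proof (q_nonneg j (Z.of_nat a + 2)).
    pose proof (q_nonneg j (Z.of_nat a)).
    set (A := INR a) in *. set (J := INR j) in *.
    set (q0 := q j (Z.of_nat rho)) in *.
    assert (Hneg : forall B, 2 * J < B -> q0 * (1 - B / (2 * J)) <= 0).
    { intros. assert (1 < B / (2*J)). { apply Rmult_lt_reg_r with (2*J). lra.
        unfold Rdiv. rewrite Rmult_assoc, Rinv_l by lra. lra. } nra. }
    destruct (Rle_lt_dec (2 * A + 2) J).
    + pose proof (q_step_lower j a Hj r) as Hs. fold A J in Hs.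
      destruct (Rle_lt_dec (A^2) (2*J)).
      *
        assert (Hf : 0 <= 1 - A ^ 2 / (2 * J)).
        { assert (A^2/(2*J) <= 1). { apply Rmult_le_reg_r with (2*J). lra.
            unfold Rdiv. rewrite Rmult_assoc, Rinv_l by lra. lra. } lra. }
        apply Rle_ge. apply Rmult_le_reg_r with J. lra.
        apply Rle_trans with (q j (Z.of_nat a) * (J - (2 * A + 2))); [|lra].
        apply Rle_trans with (q0 * (1 - A ^ 2 / (2 * J)) * (J - (2 * A + 2))).
        2:{ apply Rmult_le_compat_r. lra. lra. }
        replace (q0 * (1 - (A + 2) ^ 2 / (2 * J)) * J) with
          (q0 * ((1 - A ^ 2 / (2 * J)) * J - (2*A+2))) by (field; lra).
        replace (q0 * (1 - A ^ 2 / (2 * J)) * (J - (2 * A + 2))) with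
          (q0 * ((1 - A ^ 2 / (2 * J)) * J - (1 - A ^ 2 / (2 * J)) * (2*A+2))) by ring.
        apply Rmult_le_compat_l. lra.
        assert ((1 - A ^ 2 / (2 * J)) * (2*A+2) <= 2*A+2) .
        { assert (0 <= A^2/(2*J)). { apply Rmult_le_pos. nra. left. apply Rinv_0_lt_compat. lra. }
          nra. }
        lra.
      * apply Rle_ge. eapply Rle_trans. apply Hneg. nra. lra.
    + apply Rle_ge. eapply Rle_trans. apply Hneg. nra. lra.
Qed.

Definition lj (j : nat) : R := if Nat.even j then q j 0 else q j 1.

Lemma lj_bound : forall j, 1 <= 4 * (lj j ^ 2 * (2 * INR j + 1)).
Proof.
  intros. unfold lj. destruct (Nat.Even_or_Odd j) as [[m Hm]|[m Hm]]; subst.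
  - replace (Nat.even (2*m)) with true by (rewrite Nat.even_mul; reflexivity). pose proof (q_center_lo m).
    rewrite mult_INR. replace (INR 2) with 2 by (simpl; ring). pose proof (pos_INR m).
    assert (0 <= q (2*m) 0 ^ 2) by nra.
    replace (q (2 * m) 0 ^ 2 * (2 * (2 * INR m) + 1)) with (q (2 * m) 0 ^ 2 * (4 * INR m + 1)) by ring.
    lra.
  - replace (Nat.even (2*m+1)) with false.
    2:{ rewrite Nat.even_add, Nat.even_mul. reflexivity. }
    replace (2*m+1)%nat with (S (2*m)) by lia. rewrite q_odd1.
    pose proof (q_center_lo m). rewrite S_INR, mult_INR. replace (INR 2) with 2 by (simpl; ring). pose proof (pos_INR m).
    pose proof (q_nonneg (2*m) 0). pose proof (q_nonneg (2*m) 2).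
    set (x := q (2*m) 0) in *. set (y := q (2*m) 2) in *.
    assert (x^2 <= 4 * ((x+y)/2)^2) by nra. nra.
Qed.

Lemma lj_nonneg : forall j, 0 <= lj j.
Proof. intros. unfold lj. destruct (Nat.even j); apply q_nonneg. Qed.

Lemma q_pair : forall j (a : Z), (1 <= j)%nat ->
  4 * IZR a ^ 2 <= INR j -> 4 * IZR (a + 1) ^ 2 <= INR j ->
  7/8 * lj j <= q j a + q j (a + 1).
Proof.
  intros j a Hj H1 H2.
  assert (Hb : exists b, (b = a \/ b = a + 1)%Z /\ Z.Even (Z.of_nat j + b)).
  { destruct (Z.Even_or_Odd (Z.of_nat j + a)).
    - exists a. auto.
    - exists (a+1)%Z. split; auto. destruct H as [w Hw]. exists (w+1)%Z. lia. }
  destruct Hb as [b [Hba Hbe]].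
  assert (Hqb : q j b <= q j a + q j (a+1)).
  { pose proof (q_nonneg j a). pose proof (q_nonneg j (a+1)). destruct Hba; subst; lra. }
  assert (Hb2 : 4 * IZR b ^ 2 <= INR j) by (destruct Hba; subst; auto).
  eapply Rle_trans; [|apply Hqb].
  assert (Hrt : exists rho t : nat, Z.abs b = Z.of_nat (rho + 2 * t) /\
     lj j = q j (Z.of_nat rho)).
  { unfold lj. destruct (Nat.Even_or_Odd j) as [[m Hm]|[m Hm]].
    - rewrite Hm, Nat.even_mul. simpl Nat.even. rewrite <- Hm.
      destruct Hbe as [w Hw]. exists 0%nat, (Z.to_nat (Z.abs b / 2)).
      split; auto. destruct (Z_le_gt_dec 0 b).
      + rewrite Z.abs_eq by lia. assert (b = 2 * (w - Z.of_nat m))%Z by lia.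
        subst b. rewrite Z.mul_comm, Z.div_mul by lia. lia.
      + rewrite Z.abs_neq by lia. assert (-b = 2 * (Z.of_nat m - w))%Z by lia.
        rewrite H. rewrite Z.mul_comm, Z.div_mul by lia. lia.
    - replace (Nat.even j) with false.
      2:{ rewrite Hm, Nat.even_add, Nat.even_mul. reflexivity. }
      destruct Hbe as [w Hw]. exists 1%nat, (Z.to_nat ((Z.abs b - 1) / 2)).
      split; auto. destruct (Z_le_gt_dec 0 b).
      + rewrite Z.abs_eq by lia. assert (b - 1 = 2 * (w - Z.of_nat m - 1))%Z by lia.
        rewrite H. rewrite Z.mul_comm, Z.div_mul by lia. lia.
      + rewrite Z.abs_neq by lia. assert (-b - 1 = 2 * (Z.of_nat m - w))%Z by lia.
        rewrite H. rewrite Z.mul_comm, Z.div_mul by lia. lia. }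
  destruct Hrt as [rho [t [Hab Hl]]].
  assert (Hqq : q j b = q j (Z.of_nat (rho + 2 * t))).
  { rewrite <- Hab. destruct (Z_le_gt_dec 0 b).
    - rewrite Z.abs_eq by lia. auto.
    - rewrite Z.abs_neq by lia. rewrite q_sym. auto. }
  assert (HI : INR (rho + 2 * t) ^ 2 = IZR b ^ 2).
  { rewrite INR_IZR_INZ. rewrite <- Hab.
    destruct (Z_le_gt_dec 0 b).
    - rewrite Z.abs_eq by lia. auto.
    - rewrite Z.abs_neq by lia. rewrite Ropp_Ropp_IZR. ring. }
  pose proof (q_lower_nat j rho t Hj) as HL. rewrite <- Hqq, HI, <- Hl in HL.
  pose proof (le_INR _ _ Hj) as HJ. simpl in HJ.
  assert (IZR b ^ 2 / (2 * INR j) <= 1/8).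
  { apply Rmult_le_reg_r with (2 * INR j). lra. unfold Rdiv.
    rewrite Rmult_assoc, Rinv_l by lra. lra. }
  pose proof (lj_nonneg j). nra.
Qed.

Definition pr1 (r j : nat) (c : Z) : R :=
  sum_f_R0 (fun i => q j (c - Z.of_nat r + Z.of_nat i)%Z) (2 * r).

Lemma pr1_S : forall r j c, pr1 r (S j) c = (pr1 r j (c - 1) + pr1 r j (c + 1)) / 2.
Proof.
  intros. unfold pr1. unfold Rdiv. rewrite <- sum_plus.
  rewrite Rmult_comm, scal_sum. apply sum_eq. intros.
  rewrite q_S. unfold Rdiv. f_equal. f_equal; f_equal; lia.
Qed.

Lemma sum_nonneg : forall f N, (forall i, (i <= N)%nat -> 0 <= f i) -> 0 <= sum_f_R0 f N.
Proof.
  induction N; intros; simpl. apply H; lia.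
  pose proof (H (S N) ltac:(lia)). pose proof (IHN ltac:(intros; apply H; lia)). lra.
Qed.

Lemma sum_ge_term : forall f N i, (forall i, (i <= N)%nat -> 0 <= f i) -> (i <= N)%nat -> f i <= sum_f_R0 f N.
Proof.
  induction N; intros; simpl.
  - replace i with 0%nat by lia. lra.
  - destruct (Nat.eq_dec i (S N)). subst. pose proof (sum_nonneg f N ltac:(intros; apply H; lia)). lra.
    pose proof (IHN i ltac:(intros; apply H; lia) ltac:(lia)). pose proof (H (S N) ltac:(lia)). lra.
Qed.

Lemma sum_le_const : forall f N B, (forall i, (i <= N)%nat -> f i <= B) -> sum_f_R0 f N <= B * INR (S N).
Proof.
  intros. rewrite <- sum_cte. apply sum_Rle. auto.
Qed.

Lemma pr1_nonneg : forall r j c, 0 <= pr1 r j c.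
Proof. intros. unfold pr1. apply sum_nonneg. intros. apply q_nonneg. Qed.

Lemma pr1_0_in : forall r c, (Z.abs c <= Z.of_nat r)%Z -> 1 <= pr1 r 0 c.
Proof.
  intros. unfold pr1.
  eapply Rle_trans; [|apply sum_ge_term with (i := Z.to_nat (Z.of_nat r - c))].
  - simpl. destruct (Z.eq_dec _ 0). lra. lia.
  - intros. apply q_nonneg.
  - lia.
Qed.

Definition G (j : nat) : R := (q j 0 + q j 1) * exp (1/4).

Lemma pr1_upper : forall r j c (Zz : R),
  (forall i, (i <= 2 * r)%nat -> Zz <= IZR (c - Z.of_nat r + Z.of_nat i) ^ 2) ->
  pr1 r j c <= G j * exp (- Zz / (4 * (INR j + 1))) * INR (S (2 * r)).
Proof.
  intros. unfold pr1. apply sum_le_const. intros.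
  eapply Rle_trans. apply q_gauss. unfold G. pose proof (pos_INR j).
  apply Rmult_le_compat_l.
  - pose proof (q_nonneg j 0). pose proof (q_nonneg j 1). pose proof (exp_pos (1/4)). nra.
  - apply exp_le_mono. unfold Rdiv. rewrite <- !Ropp_mult_distr_l. apply Ropp_le_contravar.
    apply Rmult_le_compat_r. left. apply Rinv_0_lt_compat. lra. apply H. auto.
Qed.

Lemma pr1_upper0 : forall r j c, pr1 r j c <= G j * INR (S (2 * r)).
Proof.
  intros. eapply Rle_trans. apply pr1_upper with (Zz := 0).
  intros. nra. pose proof (pos_INR j).
  replace (- 0 / (4 * (INR j + 1))) with 0 by (field; lra). rewrite exp_0. lra.
Qed.

Lemma sum_pairs : forall f r L, (forall i, 0 <= f i) ->
  (forall i, (i < r)%nat -> L <= f (2 * i + 1)%nat + f (2 * i + 2)%nat) ->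
  INR r * L <= sum_f_R0 f (2 * r).
Proof.
  induction r; intros.
  - simpl. pose proof (H 0%nat). lra.
  - replace (2 * S r)%nat with (S (S (2 * r))) by lia.
    change (sum_f_R0 f (S (S (2*r)))) with (sum_f_R0 f (2*r) + f (S (2*r)) + f (S (S (2*r)))).
    pose proof (IHr L H ltac:(intros; apply H0; lia)).
    pose proof (H0 r ltac:(lia)). rewrite S_INR.
    replace (S (2 * r)) with (2 * r + 1)%nat by lia.
    replace (S (2 * r + 1)) with (2 * r + 2)%nat by lia. lra.
Qed.

Lemma pr1_lower : forall r j c, (1 <= r)%nat -> (Z.abs c <= Z.of_nat r)%Z ->
  (16 * (r + 1) ^ 2 <= j)%nat ->
  INR r * (7/8 * lj j) <= pr1 r j c.
Proof.
  intros. assert (Hj : (1 <= j)%nat) by (cbn [Nat.pow] in H1; nia).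
  unfold pr1. apply sum_pairs.
  - intros. apply q_nonneg.
  - intros. replace (c - Z.of_nat r + Z.of_nat (2 * i + 2))%Z
      with ((c - Z.of_nat r + Z.of_nat (2 * i + 1)) + 1)%Z by lia.
    apply q_pair. exact Hj.
    + apply le_INR in H1. rewrite mult_INR, pow_INR, plus_INR in H1.
      set (a := (c - Z.of_nat r + Z.of_nat (2 * i + 1))%Z).
      assert (Ha : (- (2 * Z.of_nat r) <= a <= 2 * Z.of_nat r)%Z) by (unfold a; lia).
      destruct Ha as [Ha1 Ha2]. apply IZR_le in Ha1. apply IZR_le in Ha2.
      rewrite opp_IZR, mult_IZR, <- INR_IZR_INZ in Ha1. rewrite mult_IZR, <- INR_IZR_INZ in Ha2.
      replace (INR 16) with 16 in H1 by (simpl; ring). replace (INR 1) with 1 in H1 by (simpl; ring).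
      pose proof (pos_INR r). nra.
    + apply le_INR in H1. rewrite mult_INR, pow_INR, plus_INR in H1.
      set (a := (c - Z.of_nat r + Z.of_nat (2 * i + 1) + 1)%Z).
      assert (Ha : (- (2 * Z.of_nat r) <= a <= 2 * Z.of_nat r)%Z) by (unfold a; lia).
      destruct Ha as [Ha1 Ha2]. apply IZR_le in Ha1. apply IZR_le in Ha2.
      rewrite opp_IZR, mult_IZR, <- INR_IZR_INZ in Ha1. rewrite mult_IZR, <- INR_IZR_INZ in Ha2.
      replace (INR 16) with 16 in H1 by (simpl; ring). replace (INR 1) with 1 in H1 by (simpl; ring).
      pose proof (pos_INR r). nra.
Qed.

Definition uu (p : Z * Z) : Z := (fst p + snd p)%Z.
Definition vv (p : Z * Z) : Z := (fst p - snd p)%Z.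

Definition eB (r : nat) (z : Z * Z) (j : nat) (p : Z * Z) : R :=
  pr1 r j (uu z - uu p) * pr1 r j (vv z - vv p).

Definition nb (f : Z * Z -> R) (p : Z * Z) : R :=
  f (addZ2 p (step East)) + f (addZ2 p (step West)) + f (addZ2 p (step North)) + f (addZ2 p (step South)).

Lemma eB_nonneg : forall r z j p, 0 <= eB r z j p.
Proof. intros. unfold eB. apply Rmult_le_pos; apply pr1_nonneg. Qed.

Lemma eB_S : forall r z j p, eB r z (S j) p = nb (eB r z j) p / 4.
Proof.
  intros. unfold nb, eB. rewrite !pr1_S. unfold uu, vv, addZ2. simpl.
  destruct p as [p1 p2]. destruct z as [z1 z2]. simpl.
  replace (z1 + z2 - (p1 + 1 + (p2 + 0)))%Z with (z1 + z2 - (p1 + p2) - 1)%Z by lia.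
  replace (z1 - z2 - (p1 + 1 - (p2 + 0)))%Z with (z1 - z2 - (p1 - p2) - 1)%Z by lia.
  replace (z1 + z2 - (p1 + -1 + (p2 + 0)))%Z with (z1 + z2 - (p1 + p2) + 1)%Z by lia.
  replace (z1 - z2 - (p1 + -1 - (p2 + 0)))%Z with (z1 - z2 - (p1 - p2) + 1)%Z by lia.
  replace (z1 + z2 - (p1 + 0 + (p2 + 1)))%Z with (z1 + z2 - (p1 + p2) - 1)%Z by lia.
  replace (z1 - z2 - (p1 + 0 - (p2 + 1)))%Z with (z1 - z2 - (p1 - p2) + 1)%Z by lia.
  replace (z1 + z2 - (p1 + 0 + (p2 + -1)))%Z with (z1 + z2 - (p1 + p2) + 1)%Z by lia.
  replace (z1 - z2 - (p1 + 0 - (p2 + -1)))%Z with (z1 - z2 - (p1 - p2) - 1)%Z by lia.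
  field.
Qed.

Definition Ecum (r : nat) (z : Z * Z) (m : nat) (p : Z * Z) : R :=
  sum_f_R0 (fun j => eB r z j p) m.

Lemma Ecum_S : forall r z m p, Ecum r z (S m) p = eB r z 0 p + nb (Ecum r z m) p / 4.
Proof.
  intros r z m. induction m; intros.
  - unfold Ecum, nb. simpl. rewrite eB_S. unfold nb. reflexivity.
  - unfold Ecum in *. change (sum_f_R0 (fun j => eB r z j p) (S (S m)))
      with (sum_f_R0 (fun j => eB r z j p) (S m) + eB r z (S (S m)) p).
    rewrite IHm. unfold nb. simpl sum_f_R0 at 5 6 7 8. rewrite eB_S. unfold nb. simpl step. lra.
Qed.

Lemma Ecum_nonneg : forall r z m p, 0 <= Ecum r z m p.
Proof. intros. apply sum_nonneg. intros. apply eB_nonneg. Qed.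

Lemma Ecum_mono : forall r z m d p, Ecum r z m p <= Ecum r z (d + m) p.
Proof.
  induction d; intros. simpl. lra.
  eapply Rle_trans. apply IHd. unfold Ecum. rewrite Nat.add_succ_l. simpl.
  pose proof (eB_nonneg r z (S (d + m)) p). lra.
Qed.

Definition hr (z : Z * Z) (k m : nat) (p : Z * Z) : R := INR (hc z k m p) / 4 ^ m.

Lemma markov : forall r z k n M, 0 <= M ->
  (forall x, in_square z k x = true -> M <= Ecum r z n x) ->
  forall m p, hr z k m p * M <= Ecum r z (m + n) p.
Proof.
  intros r z k n M HM Hx. induction m; intros.
  - unfold hr. rewrite hc_0. simpl. destruct (in_square z k p) eqn:E.
    + simpl. replace (1/1*M) with M by field. auto.
    + simpl. replace (0/1*M) with 0 by field. apply Ecum_nonneg.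
  - destruct (in_square z k p) eqn:E.
    + unfold hr. rewrite hc_S_in by auto. rewrite pow_INR.
      replace (INR 4) with 4 by (simpl; ring).
      replace (4 ^ S m / 4 ^ S m * M) with M by (field; apply pow_nonzero; lra).
      eapply Rle_trans. apply (Hx p E). apply (Ecum_mono r z n (S m) p).
    + unfold hr. rewrite hc_S_out by auto. rewrite !plus_INR.
      simpl Nat.add. rewrite Ecum_S. unfold nb.
      pose proof (IHm (addZ2 p (step East))). pose proof (IHm (addZ2 p (step West))).
      pose proof (IHm (addZ2 p (step North))). pose proof (IHm (addZ2 p (step South))).
      unfold hr in *. pose proof (eB_nonneg r z 0 p).
      assert (H4 : 0 < 4 ^ m) by (apply pow_lt; lra).
      replace ((INR (hc z k m (addZ2 p (step East))) + INR (hc z k m (addZ2 p (step West))) +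
        INR (hc z k m (addZ2 p (step North))) + INR (hc z k m (addZ2 p (step South)))) / 4 ^ S m * M)
      with ((INR (hc z k m (addZ2 p (step East))) / 4 ^ m * M + INR (hc z k m (addZ2 p (step West))) / 4^m * M +
        INR (hc z k m (addZ2 p (step North))) / 4^m * M + INR (hc z k m (addZ2 p (step South))) / 4^m * M) / 4)
      by (simpl; field; lra).
      lra.
Qed.

Lemma ln_le' : forall a b, 0 < a -> a <= b -> ln a <= ln b.
Proof. intros. destruct H0. left. apply ln_increasing; auto. subst. lra. Qed.

Lemma ln_1p_le : forall x, 0 < x -> ln (1 + x) <= x.
Proof.
  intros. rewrite <- (ln_exp x) at 2. apply ln_le'. lra. apply exp_ineq1_le.
Qed.

Lemma harmonic : forall (J : nat), (1 <= J)%nat -> forall n,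
  ln (INR n + 1) - ln (INR J) <= sum_f_R0 (fun j => if le_dec J j then / INR j else 0) n.
Proof.
  intros J HJ. pose proof (le_INR _ _ HJ) as HJr. simpl in HJr.
  assert (H0 : 0 <= ln (INR J)). { rewrite <- ln_1. apply ln_le'; lra. }
  induction n.
  - simpl. destruct (le_dec J 0). lia. rewrite Rplus_0_l, ln_1. lra.
  - rewrite tech5. destruct (le_dec J (S n)).
    + replace (INR (S n)) with (INR n + 1) by (rewrite S_INR; ring). pose proof (pos_INR n).
      assert (ln (INR n + 1 + 1) - ln (INR n + 1) <= / (INR n + 1)).
      { replace (INR n + 1 + 1) with ((INR n + 1) * (1 + / (INR n + 1))) by (field; lra).
        rewrite ln_mult. pose proof (ln_1p_le (/ (INR n + 1))). 
        assert (0 < / (INR n + 1)) by (apply Rinv_0_lt_compat; lra). specialize (H1 H2). lra.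
        lra. assert (0 < / (INR n + 1)) by (apply Rinv_0_lt_compat; lra). lra. }
      lra.
    + assert (S (S n) <= J)%nat by lia. apply le_INR in H. rewrite !S_INR in H.
      pose proof (pos_INR n).
      assert (ln (INR (S n) + 1) <= ln (INR J)) by (apply ln_le'; rewrite S_INR; lra).
      assert (0 <= sum_f_R0 (fun j => if le_dec J j then / INR j else 0) n).
      { apply sum_nonneg. intros. destruct (le_dec J i). left. apply Rinv_0_lt_compat.
        apply lt_0_INR. lia. lra. }
      lra.
Qed.

Lemma exp_neg_le_inv : forall x, 0 < x -> exp (- x) <= / x.
Proof.
  intros. rewrite exp_Ropp. apply Rinv_le_contravar. auto. pose proof (exp_ineq1_le x). lra.
Qed.

Lemma term_bound : forall (Zz n y : R), 1 <= n -> 25 * n <= Zz -> 1 <= y -> y <= 3 * n ->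
  / y * exp (- Zz / (100 * y)) <= 8 / n * exp (- Zz / (600 * n)).
Proof.
  intros.
  replace (- Zz / (100 * y)) with (- (Zz / (200 * y)) + - Zz / (200 * y)) by (field; lra).
  rewrite exp_plus.
  assert (E1 : exp (- Zz / (200 * y)) <= exp (- Zz / (600 * n))).
  { apply exp_le_mono. unfold Rdiv. rewrite <- !Ropp_mult_distr_l. apply Ropp_le_contravar.
    apply Rmult_le_compat_l. lra. apply Rinv_le_contravar; lra. }
  assert (E2 : exp (- (Zz / (200 * y))) <= / (Zz / (200 * y))).
  { apply exp_neg_le_inv. apply Rdiv_lt_0_compat; lra. }
  assert (E3 : / y * / (Zz / (200 * y)) <= 8 / n).
  { replace (/ y * / (Zz / (200 * y))) with (200 / Zz) by (field; lra).
    apply Rmult_le_reg_r with (Zz * n). nra. field_simplify; try lra. }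
  pose proof (exp_pos (- (Zz / (200 * y)))). pose proof (exp_pos (- Zz / (200 * y))).
  assert (0 < / y) by (apply Rinv_0_lt_compat; lra).
  apply Rle_trans with (/ y * / (Zz / (200 * y)) * exp (- Zz / (600 * n))).
  - rewrite Rmult_assoc. apply Rmult_le_compat_l. lra.
    apply Rmult_le_compat; lra.
  - apply Rmult_le_compat_r. left; apply exp_pos. auto.
Qed.

Lemma eB_lower : forall r j a b, (1 <= r)%nat -> (Z.abs a <= Z.of_nat r)%Z -> (Z.abs b <= Z.of_nat r)%Z ->
  (16 * (r + 1) ^ 2 <= j)%nat ->
  INR r ^ 2 / 16 * / INR j <= pr1 r j a * pr1 r j b.
Proof.
  intros. pose proof (pr1_lower r j a H H0 H2). pose proof (pr1_lower r j b H H1 H2).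
  assert (Hj : (1 <= j)%nat) by (cbn [Nat.pow] in H2; nia).
  apply le_INR in Hj. simpl in Hj.
  pose proof (lj_bound j). pose proof (lj_nonneg j). pose proof (pos_INR r).
  set (l := lj j) in *. set (R := INR r) in *. set (J := INR j) in *.
  assert (12 * J * l ^ 2 >= 1) by nra.
  assert (P : (R * (7/8*l))^2 <= pr1 r j a * pr1 r j b).
  { rewrite <- Rsqr_pow2. unfold Rsqr. apply Rmult_le_compat; try lra; nra. }
  apply Rmult_le_reg_r with (16 * J). lra.
  replace (R ^ 2 / 16 * / J * (16 * J)) with (R^2) by (field; lra).
  nra.
Qed.

Lemma in_square_uv : forall z k x, in_square z k x = true ->
  (Z.abs (uu z - uu x) <= Z.of_nat (2 * k + 1))%Z /\ (Z.abs (vv z - vv x) <= Z.of_nat (2 * k + 1))%Z.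
Proof.
  intros. unfold in_square in H. apply andb_prop in H. destruct H.
  apply Z.leb_le in H. apply Z.leb_le in H0. unfold uu, vv. lia.
Qed.

Lemma Ecum_ge1 : forall z k n x, in_square z k x = true -> 1 <= Ecum (2 * k + 1) z n x.
Proof.
  intros. destruct (in_square_uv z k x H).
  unfold Ecum. eapply Rle_trans; [|apply sum_ge_term with (i := 0%nat)].
  - unfold eB. pose proof (pr1_0_in _ _ H0). pose proof (pr1_0_in _ _ H1). nra.
  - intros. apply eB_nonneg.
  - lia.
Qed.

Lemma Ecum_lower_log : forall z k n x, in_square z k x = true ->
  INR (2 * k + 1) ^ 2 / 16 * (ln (INR n + 1) - ln (INR (16 * (2 * k + 1 + 1) ^ 2)))
  <= Ecum (2 * k + 1) z n x.
Proof.
  intros. destruct (in_square_uv z k x H).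
  assert (HJ : (1 <= 16 * (2 * k + 1 + 1) ^ 2)%nat) by (cbn [Nat.pow]; nia).
  eapply Rle_trans. apply Rmult_le_compat_l. 2: apply (harmonic _ HJ n).
  apply Rmult_le_pos. apply pow_le, pos_INR. lra.
  rewrite scal_sum. unfold Ecum. apply sum_Rle. intros.
  destruct (le_dec (16 * (2 * k + 1 + 1) ^ 2) n0).
  - unfold eB. rewrite Rmult_comm. apply eB_lower; auto. lia.
  - rewrite Rmult_0_l. apply eB_nonneg.
Qed.

Lemma gauss_cond : forall C Rr I Zz, Zz <= C ^ 2 -> 25 * Rr ^ 2 <= 16 * C ^ 2 -> 0 <= Rr ->
  0 <= I <= 2 * Rr -> Zz / 25 <= (C - Rr + I) ^ 2.
Proof.
  intros. destruct (Rle_lt_dec 0 C).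
  - assert (4 * C >= 5 * Rr) by nra.
    assert (C - Rr + I >= C / 5) by lra. nra.
  - assert (4 * C <= - 5 * Rr) by nra.
    assert (C - Rr + I <= C / 5) by lra. nra.
Qed.

Lemma eB0_upper : forall r c1 c2 j (n : nat) Zz,
  (1 <= n)%nat -> (j <= n + n)%nat -> 25 * INR n <= Zz ->
  Zz <= IZR c1 ^ 2 -> INR r ^ 2 <= 9 * INR n ->
  pr1 r j c1 * pr1 r j c2 <=
    2 * exp (1/2) * INR (S (2 * r)) ^ 2 * (8 / INR n * exp (- Zz / (600 * INR n))).
Proof.
  intros r c1 c2 j n Zz Hn Hj HZ Hc Hr.
  apply le_INR in Hn. apply le_INR in Hj. rewrite plus_INR in Hj. simpl in Hn.
  pose proof (pos_INR j). pose proof (pos_INR r).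
  assert (Hu : pr1 r j c1 <= G j * exp (- (Zz / 25) / (4 * (INR j + 1))) * INR (S (2 * r))).
  { apply pr1_upper. intros. rewrite plus_IZR, minus_IZR, <- !INR_IZR_INZ.
    apply gauss_cond; auto. nra. apply le_INR in H1. rewrite mult_INR in H1.
    split. apply pos_INR. replace (INR 2) with 2 in H1 by (simpl; ring). lra. }
  pose proof (pr1_upper0 r j c2) as Hv.
  pose proof (pr1_nonneg r j c1). pose proof (pr1_nonneg r j c2).
  pose proof (s_bound j). pose proof (q_nonneg j 0). pose proof (q_nonneg j 1).
  assert (HG : G j ^ 2 * (INR j + 1) <= 2 * exp (1/2)).
  { unfold G. replace (((q j 0 + q j 1) * exp (1 / 4)) ^ 2) with ((q j 0 + q j 1) ^ 2 * exp (1/2)).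
    2:{ rewrite Rpow_mult_distr. f_equal. simpl. rewrite Rmult_1_r, <- exp_plus. f_equal. lra. }
    pose proof (exp_pos (1/2)). nra. }
  assert (HGp : 0 <= G j). { unfold G. pose proof (exp_pos (1/4)). nra. }
  pose proof (term_bound Zz (INR n) (INR j + 1) Hn HZ ltac:(lra) ltac:(lra)) as HT.
  set (E := exp (- (Zz / 25) / (4 * (INR j + 1)))) in *.
  assert (HE : E = exp (- Zz / (100 * (INR j + 1)))) by (unfold E; f_equal; field; lra).
  rewrite <- HE in HT.
  set (W := INR (S (2 * r))) in *. assert (0 <= W) by apply pos_INR.
  assert (0 <= E) by (unfold E; left; apply exp_pos).
  apply Rle_trans with (G j ^ 2 * W ^ 2 * E).
  - replace (G j ^ 2 * W ^ 2 * E) with ((G j * E * W) * (G j * W)) by ring.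
    apply Rmult_le_compat; auto.
  - apply Rle_trans with (2 * exp (1/2) * W ^ 2 * (/ (INR j + 1) * E)).
    + replace (G j ^ 2 * W ^ 2 * E) with ((G j ^ 2 * (INR j + 1)) * W^2 * (/ (INR j + 1) * E)) by (field; lra).
      apply Rmult_le_compat_r. apply Rmult_le_pos; auto. left. apply Rinv_0_lt_compat. lra.
      apply Rmult_le_compat_r. nra. auto.
    + apply Rmult_le_compat_l. pose proof (exp_pos (1/2)). nra. auto.
Qed.

Lemma Ecum_upper : forall r z (n : nat) Zz,
  (1 <= n)%nat -> 25 * INR n <= Zz ->
  (Zz <= IZR (uu z) ^ 2 \/ Zz <= IZR (vv z) ^ 2) -> INR r ^ 2 <= 9 * INR n ->
  Ecum r z (n + n) (0%Z, 0%Z) <= 48 * exp (1/2) * INR (S (2 * r)) ^ 2 * exp (- Zz / (600 * INR n)).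
Proof.
  intros r z n Zz Hn HZ Hc Hr.
  unfold Ecum, eB.
  replace (uu (0%Z, 0%Z)) with 0%Z by reflexivity. replace (vv (0%Z, 0%Z)) with 0%Z by reflexivity.
  rewrite !Z.sub_0_r.
  eapply Rle_trans. apply sum_le_const with
    (B := 2 * exp (1/2) * INR (S (2 * r)) ^ 2 * (8 / INR n * exp (- Zz / (600 * INR n)))).
  - intros. destruct Hc.
    + apply eB0_upper; auto.
    + rewrite Rmult_comm. apply eB0_upper; auto.
  - apply le_INR in Hn. simpl in Hn.
    rewrite (S_INR (n + n)), plus_INR.
    pose proof (exp_pos (1/2)). pose proof (exp_pos (- Zz / (600 * INR n))).
    pose proof (pos_INR (S (2*r))).
    set (X := exp (1/2) * INR (S (2 * r)) ^ 2) in *.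
    set (E := exp (- Zz / (600 * INR n))) in *.
    assert (0 <= X) by (unfold X; nra).
    replace (2 * exp (1 / 2) * INR (S (2 * r)) ^ 2) with (2 * X) by (unfold X; ring).
    replace (48 * exp (1 / 2) * INR (S (2 * r)) ^ 2 * E) with (48 * X * E) by (unfold X; ring).
    replace (2 * X * (8 / INR n * E) * (INR n + INR n + 1)) with
      (16 * X * E * (2 + / INR n)) by (field; lra).
    assert (/ INR n <= 1). { rewrite <- Rinv_1. apply Rinv_le_contravar; lra. }
    assert (0 <= X * E) by nra. nra.
Qed.

Definition AA : R := 4 * ln 256.
Definition mu : R := / (576 * exp AA * AA).

Lemma AA_gt : 2 < AA.
Proof.
  unfold AA. replace 256 with (2 ^ 8) by (simpl; ring). rewrite ln_pow by lra.
  pose proof ln_lt_2. simpl (INR 8). lra.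
Qed.

Lemma mu_pos : 0 < mu.
Proof.
  unfold mu. pose proof AA_gt. pose proof (exp_pos AA). apply Rinv_0_lt_compat. nra.
Qed.

Theorem mainTheorem10 :
  exists c C : R, 0 < c /\ 0 < C /\
    forall (n k : nat) (z : Z * Z),
      (2 <= n)%nat ->
      INR k <= Rpower (INR n) (1 / 4) ->
      normZ2 z >= 5 * sqrt (INR n) ->
      hit_prob n z k <= C / log2 (INR n) * exp (- c * (normZ2 z ^ 2 / INR n)).
Proof.
  pose proof AA_gt as HA. pose proof mu_pos as Hmu. pose proof ln_lt_2 as Hl2.
  exists (1/600), (432 * exp (1/2) / (mu * ln 2)).
  split. lra. split.
  { pose proof (exp_pos (1/2)). apply Rdiv_lt_0_compat. lra. nra. }
  intros n k z Hn Hk Hz.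
  set (r := (2 * k + 1)%nat).
  set (nR := INR n) in *.
  assert (HnR : 2 <= nR) by (apply le_INR in Hn; simpl in Hn; unfold nR; lra).
  assert (Hln : 0 < ln nR) by (rewrite <- ln_1; apply ln_increasing; lra).
  set (t := Rpower nR (1/4)) in *.
  assert (Ht : t = exp (1/4 * ln nR)) by reflexivity.
  assert (Ht1 : 1 <= t). { rewrite Ht. pose proof (exp_ineq1_le (1/4 * ln nR)). lra. }
  assert (Ht2 : t ^ 2 = exp (1/2 * ln nR)).
  { rewrite Ht. simpl. rewrite Rmult_1_r, <- exp_plus. f_equal. lra. }
  assert (Ht4 : t ^ 2 * t ^ 2 = nR).
  { rewrite Ht2, <- exp_plus. replace (1/2 * ln nR + 1/2 * ln nR) with (ln nR) by lra.
    apply exp_ln. lra. }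
  pose proof (pos_INR k) as Hk0.
  assert (Hkn2 : INR k ^ 2 <= nR). { assert (INR k ^ 2 <= t ^ 2) by nra. nra. }
  assert (Hkn : INR k <= nR) by nra.
  assert (HrR : INR r = 2 * INR k + 1).
  { unfold r. rewrite plus_INR, mult_INR. simpl. ring. }
  assert (Hr9 : INR r ^ 2 <= 9 * nR) by (rewrite HrR; nra).
  assert (Hr1 : 1 <= INR r) by (rewrite HrR; lra).
  set (Zz := IZR (fst z) ^ 2 + IZR (snd z) ^ 2).
  assert (HnormZ : normZ2 z = sqrt Zz) by reflexivity.
  assert (HZ0 : 0 <= Zz) by (unfold Zz; nra).
  assert (Hnorm2 : normZ2 z ^ 2 = Zz).
  { rewrite HnormZ. simpl. rewrite Rmult_1_r. apply sqrt_sqrt. auto. }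
  assert (HZ : 25 * nR <= Zz).
  { rewrite <- Hnorm2. pose proof (sqrt_pos nR). pose proof (sqrt_sqrt nR ltac:(lra)).
    assert (0 <= normZ2 z) by (rewrite HnormZ; apply sqrt_pos). nra. }
  assert (Huv : Zz <= IZR (uu z) ^ 2 \/ Zz <= IZR (vv z) ^ 2).
  { unfold uu, vv. rewrite plus_IZR, minus_IZR. unfold Zz.
    destruct (Rle_lt_dec Zz (IZR (fst z + snd z) ^ 2)); [left|right]; unfold Zz in *;
      rewrite ?plus_IZR in *; nra. }
  set (M := mu * INR r ^ 2 * ln nR).
  assert (HM0 : 0 <= M) by (unfold M; apply Rmult_le_pos; [apply Rmult_le_pos; nra|lra]).
  assert (HMx : forall x, in_square z k x = true -> M <= Ecum r z n x).
  { intros x Hx. pose proof (Ecum_ge1 z k n x Hx) as G1. fold r in G1.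
    pose proof (Ecum_lower_log z k n x Hx) as GL. fold r in GL.
    destruct (Rle_lt_dec AA (ln nR)).
    -
      eapply Rle_trans; [|apply GL]. fold nR.
      set (J := INR (16 * (r + 1) ^ 2)).
      assert (HJ : J <= 256 * t ^ 2).
      { unfold J. rewrite mult_INR, pow_INR, plus_INR, HrR.
        replace (INR 16) with 16 by (simpl; ring). replace (INR 1) with 1 by (simpl; ring).
        assert (INR k + 1 <= 2 * t) by lra. nra. }
      assert (HJ1 : 1 <= J).
      { unfold J. rewrite mult_INR, pow_INR, plus_INR.
        replace (INR 16) with 16 by (simpl; ring). replace (INR 1) with 1 by (simpl; ring). nra. }
      assert (HlnJ : ln J <= ln 256 + 1/2 * ln nR).
      { eapply Rle_trans. apply ln_le'. lra. apply HJ. rewrite ln_mult by nra.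
        rewrite Ht2, ln_exp. lra. }
      assert (Hln1 : ln nR <= ln (nR + 1)) by (apply ln_le'; lra).
      assert (Hmu64 : mu <= 1/64).
      { unfold mu. pose proof (exp_ineq1_le AA). replace (1/64) with (/ 64) by field.
        apply Rinv_le_contravar. lra. nra. }
      unfold M. unfold AA in r0.
      assert (ln (nR + 1) - ln J >= ln nR / 4) by lra.
      assert (0 <= INR r ^ 2) by nra.
      apply Rle_trans with (INR r ^ 2 / 16 * (ln nR / 4)).
      + assert (0 <= INR r ^ 2 * ln nR) by nra.
        replace (INR r ^ 2 / 16 * (ln nR / 4)) with (1/64 * (INR r ^ 2 * ln nR)) by field.
        replace (mu * INR r ^ 2 * ln nR) with (mu * (INR r ^ 2 * ln nR)) by ring.
        apply Rmult_le_compat_r; lra.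
      + apply Rmult_le_compat_l. lra. lra.
    -
      eapply Rle_trans; [|apply G1].
      assert (HnA : nR <= exp AA). { rewrite <- (exp_ln nR) by lra. left. apply exp_increasing. auto. }
      unfold M, mu. pose proof (exp_pos AA).
      apply Rmult_le_reg_r with (576 * exp AA * AA). nra.
      field_simplify; try nra. }
  pose proof (markov r z k n M HM0 HMx n (0%Z, 0%Z)) as HMk.
  pose proof (Ecum_upper r z n Zz ltac:(lia) HZ Huv Hr9) as HU. fold nR in HU.
  assert (Hhit : hit_prob n z k = hr z k n (0%Z, 0%Z)) by reflexivity.
  rewrite Hhit.
  assert (HW : INR (S (2 * r)) = 2 * INR r + 1) by (rewrite S_INR, mult_INR; simpl; ring).
  rewrite HW in HU.
  fold nR. rewrite Hnorm2.
  replace (- (1 / 600) * (Zz / nR)) with (- Zz / (600 * nR)) by (field; lra).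
  set (E := exp (- Zz / (600 * nR))) in *.
  assert (HE : 0 < E) by apply exp_pos.
  unfold log2.
  replace (432 * exp (1 / 2) / (mu * ln 2) / (ln nR / ln 2) * E) with (432 * exp (1/2) * E / (mu * ln nR))
    by (field; repeat split; lra).
  pose proof (exp_pos (1/2)).
  assert (HMp : 0 < M) by (unfold M; apply Rmult_lt_0_compat; [apply Rmult_lt_0_compat; nra|lra]).
  apply Rmult_le_reg_r with M. auto.
  eapply Rle_trans. apply HMk. eapply Rle_trans. apply HU.
  unfold M. replace (432 * exp (1 / 2) * E / (mu * ln nR) * (mu * INR r ^ 2 * ln nR))
    with (432 * exp (1/2) * E * INR r ^ 2) by (field; lra).
  assert ((2 * INR r + 1) ^ 2 <= 9 * INR r ^ 2) by nra.
  assert (0 <= exp (1/2) * E) by nra. nra.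
Qed.
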